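(* Under the standing setting below, take $\rho(x,y)=\|\nabla h(x,y)\|^2$, let $\alpha>0$, $C_0>0$, and let $(x_0,y_0)$ satisfy $h(x_0,y_0)\le \alpha^2 C_0$. Let $\gamma>0$ satisfy $\gamma\le\min\{\alpha,\frac{1}{L_f+\alpha L_h}\}$ and let $\{(x_k,y_k,\lambda_k)\}_{k\ge0}$ be generated by the Algorithm. Then for every integer $K\ge1$, $$\frac1K\sum_{k=0}^{K-1}\big(\|\Delta_k^x\|^2+\|\Delta_k^y\|^2\big)\le \frac{4(f_0+\alpha^3C_0-\bar f)}{\gamma K}+\frac{2\alpha C_0}{\gamma L_h K}+2\alpha^2L_hC_f^2,$$ and $$\frac1K\sum_{k=0}^{K-1}\big(\|\nabla_x h_k\|^2+\|\nabla_y h_k\|^2\big)\le \frac{2\alpha C_0}{\gamma K}+\frac{2L_h(f_0+\alpha^3C_0-\bar f)}{\gamma K}+\alpha^2L_h^2C_f^2,$$ where $f_0=f(x_0,y_0)$.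
   Context: Standing setting. $f,g:\mathbb{R}^n\times\mathbb{R}^m\to\mathbb{R}$. $f$ is continuously differentiable, $\bar f:=\inf_{(x,y)}f(x,y)>-\infty$, $\nabla f$ is $L_f$-Lipschitz on $\mathbb{R}^{n+m}$, and $\|\nabla f(x,y)\|\le C_f$ for all $(x,y)$. $g$ is twice continuously differentiable, and $h(x,y):=\|\nabla_y g(x,y)\|^2$ is continuously differentiable with $\nabla h$ being $L_h$-Lipschitz ($L_h>0$). Write $\nabla h=(\nabla_x h,\nabla_y h)$ and, for a sequence $(x_k,y_k)$, $f_k=f(x_k,y_k)$, $h_k=h(x_k,y_k)$, $\nabla_x f_k=\nabla_x f(x_k,y_k)$, etc. Given a function $\rho:\mathbb{R}^n\times\mathbb{R}^m\to\mathbb{R}_{\ge0}$, parameters $\alpha,\gamma>0$ and a starting point $(x_0,y_0)$, the Algorithm iterates for $k\ge0$: $$\lambda_k=\frac{\big[-\nabla_x h_k^\top\nabla_x f_k-\nabla_y h_k^\top\nabla_y f_k+\alpha\rho(x_k,y_k)\big]_+}{\|\nabla_x h_k\|^2+\|\nabla_y h_k\|^2}\ \text{ if }\nabla h_k\neq0,\qquad \lambda_k=0\ \text{ if }\nabla h_k=0,$$ where $[t]_+=\max\{0,t\}$; then $\Delta_k^x=-\nabla_x f_k-\lambda_k\nabla_x h_k$, $\Delta_k^y=-\nabla_y f_k-\lambda_k\nabla_y h_k$, $x_{k+1}=x_k+\gamma\Delta_k^x$, $y_{k+1}=y_k+\gamma\Delta_k^y$. (Equivalently, $(\Delta_k^x,\Delta_k^y)$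 and $\lambda_k$ are the primal solution and multiplier of the QP $\min_{\Delta^x,\Delta^y}\frac12\|\Delta^x+\nabla_xf_k\|^2+\frac12\|\Delta^y+\nabla_yf_k\|^2$ s.t. $\nabla_xh_k^\top\Delta^x+\nabla_yh_k^\top\Delta^y+\alpha\rho(x_k,y_k)\le0$.) *)

(* Defs.v *)
From HB Require Import structures.
From mathcomp Require Import all_boot all_order all_algebra.
From mathcomp Require Import all_classical all_reals all_analysis.
Set Implicit Arguments. Unset Strict Implicit. Unset Printing Implicit Defensive.
Import Order.TTheory GRing.Theory Num.Theory.
Import numFieldNormedType.Exports.
Local Open Scope ring_scope.
Local Open Scope classical_set_scope.

Section Defs.
Variables (R : realType) (n m : nat).

Definition dotv (k : nat) (u v : 'rV[R]_k) : R := \sum_(i < k) u 0 i * v 0 i.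
Definition sqn (k : nat) (u : 'rV[R]_k) : R := dotv u u.
Definition enorm2 (u : 'rV[R]_n) (v : 'rV[R]_m) : R := Num.sqrt (sqn u + sqn v).

Local Notation P := ('rV[R]_n * 'rV[R]_m)%type.

Definition is_grad (F : P -> R) (Gx : P -> 'rV[R]_n) (Gy : P -> 'rV[R]_m) :=
  forall z : P, differentiable F z /\
    forall d : P, 'd F z d = dotv (Gx z) d.1 + dotv (Gy z) d.2.

Definition C1_vec (k : nat) (G : P -> 'rV[R]_k) :=
  (forall z : P, differentiable G z) /\
  (forall d : P, continuous (fun z : P => 'd G z d)).

Definition grad_lipschitz (Gx : P -> 'rV[R]_n) (Gy : P -> 'rV[R]_m) (L : R) :=
  forall z z' : P,
    enorm2 (Gx z - Gx z') (Gy z - Gy z') <= L * enorm2 (z.1 - z'.1) (z.2 - z'.2).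

Definition lam (Gfx Ghx : P -> 'rV[R]_n) (Gfy Ghy : P -> 'rV[R]_m)
    (rho : P -> R) (alpha : R) (z : P) : R :=
  if (Ghx z == 0) && (Ghy z == 0) then 0
  else Num.max 0 (- dotv (Ghx z) (Gfx z) - dotv (Ghy z) (Gfy z) + alpha * rho z)
       / (sqn (Ghx z) + sqn (Ghy z)).

Definition dirx Gfx Ghx Gfy Ghy rho alpha (z : P) : 'rV[R]_n :=
  - Gfx z - lam Gfx Ghx Gfy Ghy rho alpha z *: Ghx z.
Definition diry Gfx Ghx Gfy Ghy rho alpha (z : P) : 'rV[R]_m :=
  - Gfy z - lam Gfx Ghx Gfy Ghy rho alpha z *: Ghy z.

Definition alg_step Gfx Ghx Gfy Ghy rho (alpha gamma : R) (z : P) : P :=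
  (z.1 + gamma *: dirx Gfx Ghx Gfy Ghy rho alpha z,
   z.2 + gamma *: diry Gfx Ghx Gfy Ghy rho alpha z).

Definition alg_iter Gfx Ghx Gfy Ghy rho alpha gamma (z0 : P) (k : nat) : P :=
  iter k (alg_step Gfx Ghx Gfy Ghy rho alpha gamma) z0.

End Defs.

(* Main.v *)
Require Import Defs.
From HB Require Import structures.
From mathcomp Require Import all_boot all_order all_algebra.
From mathcomp Require Import all_classical all_reals all_analysis.
Import Order.TTheory GRing.Theory Num.Theory.
Import numFieldNormedType.Exports.
Local Open Scope ring_scope.
Local Open Scope classical_set_scope.
From mathcomp Require Import ring lra.
Set Implicit Arguments. Unset Strict Implicit. Unset Printing Implicit Defensive.

Section Aux.
Variable R : realType.

Lemma dotvC k (u v : 'rV[R]_k) : dotv u v = dotv v u.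
Proof. by rewrite /dotv; apply: eq_bigr => i _; rewrite mulrC. Qed.
Lemma dotvDl k (u v w : 'rV[R]_k) : dotv (u + v) w = dotv u w + dotv v w.
Proof. by rewrite /dotv -big_split; apply: eq_bigr => i _; rewrite mxE mulrDl. Qed.
Lemma dotvNl k (u w : 'rV[R]_k) : dotv (- u) w = - dotv u w.
Proof. by rewrite /dotv -sumrN; apply: eq_bigr => i _; rewrite mxE mulNr. Qed.
Lemma dotvZl k a (u w : 'rV[R]_k) : dotv (a *: u) w = a * dotv u w.
Proof. by rewrite /dotv mulr_sumr; apply: eq_bigr => i _; rewrite mxE mulrA. Qed.
Lemma dotvBl k (u v w : 'rV[R]_k) : dotv (u - v) w = dotv u w - dotv v w.
Proof. by rewrite dotvDl dotvNl. Qed.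
Lemma dotvDr k (u v w : 'rV[R]_k) : dotv w (u + v) = dotv w u + dotv w v.
Proof. by rewrite dotvC dotvDl !(dotvC w). Qed.
Lemma dotvNr k (u w : 'rV[R]_k) : dotv w (- u) = - dotv w u.
Proof. by rewrite dotvC dotvNl dotvC. Qed.
Lemma dotvZr k a (u w : 'rV[R]_k) : dotv w (a *: u) = a * dotv w u.
Proof. by rewrite dotvC dotvZl dotvC. Qed.
Lemma sqn_ge0 k (u : 'rV[R]_k) : 0 <= sqn u.
Proof. by apply: sumr_ge0 => i _; rewrite -expr2 sqr_ge0. Qed.
Lemma sqn_eq0 k (u : 'rV[R]_k) : sqn u = 0 -> u = 0.
Proof.
move=> /psumr_eq0P H; apply/rowP => i; rewrite mxE.
have /eqP := H (fun j _ => ltac:(by rewrite -expr2 sqr_ge0)) i isT.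
by rewrite mulf_eq0 orbb => /eqP.
Qed.
Lemma sqn_lin k (u d : 'rV[R]_k) t :
  sqn (u - t *: d) = sqn u - 2 * t * dotv u d + t ^+ 2 * sqn d.
Proof.
rewrite /sqn !dotvBl !dotvDr !dotvNr !dotvZl !dotvZr (dotvC d u); ring.
Qed.

Lemma cs_scalar (A B C : R) : 0 <= A -> 0 <= C ->
  (forall t, 0 <= A - 2 * t * B + t ^+ 2 * C) -> `|B| <= Num.sqrt A * Num.sqrt C.
Proof.
move=> A0 C0 H.
suff HB : B ^+ 2 <= A * C.
  by rewrite -sqrtrM // -sqrtr_sqr ler_wsqrtr.
have [Cz|Cp] := eqVneq C 0.
  have [Bz|Bn] := eqVneq B 0; first by rewrite Bz Cz expr0n /= mulr0.
  have := H ((A + 1) / (2 * B)).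
  have -> : 2 * ((A + 1) / (2 * B)) * B = A + 1 by field; rewrite Bn.
  rewrite Cz mulr0; lra.
have Cpos : 0 < C by rewrite lt_def Cp C0.
have := H (B / C).
have -> : A - 2 * (B / C) * B + (B / C) ^+ 2 * C = (A * C - B ^+ 2) / C.
  by field; rewrite ?Kn ?Ln ?gn.
by rewrite pmulr_lge0 ?invr_gt0 // subr_ge0.
Qed.
Lemma cs2 n m (u1 d1 : 'rV[R]_n) (u2 d2 : 'rV[R]_m) :
  `|dotv u1 d1 + dotv u2 d2| <= enorm2 u1 u2 * enorm2 d1 d2.
Proof.
apply: cs_scalar; rewrite ?addr_ge0 ?sqn_ge0 // => t.
have := addr_ge0 (sqn_ge0 (u1 - t *: d1)) (sqn_ge0 (u2 - t *: d2)).
move/le_trans; apply; rewrite !sqn_lin le_eqVlt; apply/orP; left; apply/eqP; ring.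
Qed.

Lemma enorm2_ge0 n m (u : 'rV[R]_n) (v : 'rV[R]_m) : 0 <= enorm2 u v.
Proof. exact: sqrtr_ge0. Qed.

Lemma enorm2_sq n m (u : 'rV[R]_n) (v : 'rV[R]_m) :
  enorm2 u v * enorm2 u v = sqn u + sqn v.
Proof. by rewrite -expr2 sqr_sqrtr // addr_ge0 ?sqn_ge0. Qed.

Lemma sqnZ k t (u : 'rV[R]_k) : sqn (t *: u) = t ^+ 2 * sqn u.
Proof. by rewrite /sqn dotvZl dotvZr mulrA expr2. Qed.

Lemma sqnN k (u : 'rV[R]_k) : sqn (- u) = sqn u.
Proof. by rewrite /sqn dotvNl dotvNr opprK. Qed.

Lemma enorm2Z n m t (u : 'rV[R]_n) (v : 'rV[R]_m) :
  enorm2 (t *: u) (t *: v) = `|t| * enorm2 u v.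
Proof.
by rewrite /enorm2 !sqnZ -mulrDr sqrtrM ?sqr_ge0 // sqrtr_sqr.
Qed.

End Aux.

Section Aux2.
Variable R : realType.
Variables n m : nat.
Local Notation P := ('rV[R]_n * 'rV[R]_m)%type.

Lemma line_derive (F : P -> R) (z d : P) t :
  differentiable F (z + t *: d) ->
  is_derive t 1 (fun s : R => F (z + s *: d)) ('d F (z + t *: d) d).
Proof.
move=> dF.
have E : (fun h : R => h^-1 *: (((fun s : R => F (z + s *: d)) \o shift t) (h *: 1)
            - F (z + t *: d))) =
         (fun h : R => h^-1 *: ((F \o shift (z + t *: d)) (h *: d) - F (z + t *: d))).
  apply/funext => h /=.
  congr (_ *: (F _ - _)).
  rewrite scalerDl.
  by rewrite [h%:A]mulr1 addrCA.
apply: DeriveDef.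
  rewrite /derivable E; exact: diff_derivable.
by rewrite /derive E -deriveE.
Qed.

Lemma descent (F : P -> R) Gx Gy L (z d : P) :
  is_grad F Gx Gy -> grad_lipschitz Gx Gy L -> 0 <= L ->
  F (z + d) <= F z + (dotv (Gx z) d.1 + dotv (Gy z) d.2)
               + L / 2 * (sqn d.1 + sqn d.2).
Proof.
move=> gF Lip L0.
set B := dotv (Gx z) d.1 + dotv (Gy z) d.2.
set c := L / 2 * (sqn d.1 + sqn d.2).
pose G := fun s : R => F (z + s *: d).
pose psi : R -> R := (G - (B \*: (@id R : R -> R) + c \*: ((@id R : R -> R) * (@id R : R -> R))))%R.
have Dpsi : forall t : R, is_derive t 1 psi
   ('d F (z + t *: d) d - (B *: 1 + c *: (t *: 1 + t *: 1))).
  move=> t; apply: is_deriveB; first exact/line_derive/(gF _).1.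
have key : forall t : R, 0 < t ->
  'd F (z + t *: d) d - B <= L * t * (sqn d.1 + sqn d.2).
  move=> t t0; rewrite (gF _).2.
  set w := z + t *: d.
  have e1 : w.1 - z.1 = t *: d.1.
    by rewrite /w /= addrC addKr.
  have e2 : w.2 - z.2 = t *: d.2.
    by rewrite /w /= addrC addKr.
  have H1 := cs2 (Gx w - Gx z) d.1 (Gy w - Gy z) d.2.
  have H2 := Lip w z; rewrite e1 e2 enorm2Z gtr0_norm // in H2.
  rewrite /B -enorm2_sq.
  have -> : dotv (Gx w) d.1 + dotv (Gy w) d.2 - (dotv (Gx z) d.1 + dotv (Gy z) d.2)
     = dotv (Gx w - Gx z) d.1 + dotv (Gy w - Gy z) d.2 by rewrite !dotvBl; ring.
  apply: le_trans (ler_norm _) _; apply: le_trans H1 _.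
  rewrite mulrA; apply: ler_wpM2r; first exact: enorm2_ge0.
  by rewrite -mulrA.
have df : forall x : R, x \in `]0, 1[%R -> derivable psi x 1.
  by move=> x _; exact: ex_derive.
have dfle0 : forall x : R, x \in `]0, 1[%R -> psi^`() x <= 0.
  move=> x; rewrite in_itv /= => /andP[x0 x1]; rewrite derive1E derive_val.
  have := key x x0.
  rewrite [B%:A]mulr1 [x%:A]mulr1.
  have -> : c *: (x + x) = L * x * (sqn d.1 + sqn d.2).
    by change (c * (x + x) = L * x * (sqn d.1 + sqn d.2)); rewrite /c; field.
  lra.
have cont : {within `[0, 1], continuous psi}.
  by apply: derivable_within_continuous => x _; exact: ex_derive.
have mono := ler0_derive1_le_cc df dfle0 cont.
have i0 : (0:R) \in `[0, 1]%R by rewrite in_itv /= lexx ler01.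
have i1 : (1:R) \in `[0, 1]%R by rewrite in_itv /= lexx ler01.
have := mono 1 0 i1 i0 ler01.
change (F (z + 1 *: d) - (B * 1 + c * (1 * 1)) <= F (z + 0 *: d) - (B * 0 + c * (0 * 0)) -> F (z + d) <= F z + B + c).
rewrite scale1r scale0r addr0; lra.
Qed.

Lemma dotv0l k (w : 'rV[R]_k) : dotv 0 w = 0.
Proof. by rewrite /dotv big1 // => i _; rewrite mxE mul0r. Qed.
Lemma sqn0 k : sqn (0 : 'rV[R]_k) = 0.
Proof. exact: dotv0l. Qed.

Lemma dir1 k (u v : 'rV[R]_k) l : dotv u (- u - l *: v) = - sqn u - l * dotv v u.
Proof. by rewrite dotvDr dotvNr dotvNr dotvZr (dotvC u v) /sqn; ring. Qed.
Lemma dir2 k (u v : 'rV[R]_k) l : dotv v (- u - l *: v) = - dotv v u - l * sqn v.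
Proof. by rewrite dotvDr dotvNr dotvNr dotvZr /sqn; ring. Qed.
Lemma dir3 k (u v : 'rV[R]_k) l :
  sqn (- u - l *: v) = sqn u + 2 * l * dotv v u + l ^+ 2 * sqn v.
Proof.
rewrite /sqn !dotvDl !dotvNl !dotvDr !dotvNr !dotvZl !dotvZr (dotvC u v); ring.
Qed.

Lemma lam_props (Gfx Ghx : P -> 'rV[R]_n) (Gfy Ghy : P -> 'rV[R]_m) (alpha : R) z :
  let rho := fun z => sqn (Ghx z) + sqn (Ghy z) in
  let l := lam Gfx Ghx Gfy Ghy rho alpha z in
  let a := dotv (Ghx z) (Gfx z) + dotv (Ghy z) (Gfy z) in
  l * (l * rho z - (alpha * rho z - a)) = 0 /\ alpha * rho z - a <= l * rho z.
Proof.
move=> rho l a; rewrite /l /lam.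
case: ifP => [/andP[/eqP hx /eqP hy] | hn].
  rewrite /a /rho hx hy !sqn0 !dotv0l; split; first by rewrite mul0r.
  by rewrite !addr0 mulr0 subr0 mulr0.
have r0 : rho z != 0.
  apply/eqP => r0; move: hn; rewrite /rho in r0.
  have h1 := sqn_ge0 (Ghx z); have h2 := sqn_ge0 (Ghy z).
  have e1 : sqn (Ghx z) = 0 by lra.
  have e2 : sqn (Ghy z) = 0 by lra.
  by rewrite (sqn_eq0 e1) (sqn_eq0 e2) !eqxx.
have -> : - dotv (Ghx z) (Gfx z) - dotv (Ghy z) (Gfy z) + alpha * rho z
   = alpha * rho z - a by rewrite /a; ring.
rewrite divfK //.
have [hle|hlt] := leP 0 (alpha * rho z - a).
  by rewrite subrr mulr0; split.
by rewrite mul0r mul0r; split => //; exact: ltW.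
Qed.

Lemma step_ineq (f hf : P -> R) Gfx Gfy Ghx Ghy (Lf Lh Cf alpha gamma : R) z :
  is_grad f Gfx Gfy -> grad_lipschitz Gfx Gfy Lf -> 0 <= Lf ->
  (forall z, enorm2 (Gfx z) (Gfy z) <= Cf) ->
  is_grad hf Ghx Ghy -> grad_lipschitz Ghx Ghy Lh -> 0 < Lh ->
  0 < alpha -> 0 < gamma -> gamma <= alpha -> gamma <= 1 / (Lf + alpha * Lh) ->
  let rho := fun z => sqn (Ghx z) + sqn (Ghy z) in
  let z' := alg_step Gfx Ghx Gfy Ghy rho alpha gamma z in
  let D2 := sqn (dirx Gfx Ghx Gfy Ghy rho alpha z)
            + sqn (diry Gfx Ghx Gfy Ghy rho alpha z) in
  2 * Lh * (f z' + alpha * hf z') + gamma * Lh * D2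
    <= 2 * Lh * (f z + alpha * hf z) + gamma * (alpha ^+ 2 * Lh ^+ 2 * Cf ^+ 2)
       + gamma * rho z
  /\ 2 * hf z' + 2 * gamma * alpha * rho z <= 2 * hf z + Lh * gamma * alpha * D2.
Proof.
move=> gf Lipf Lf0 Cfb gh Liph Lh0 a0 g0 ga gL rho z' D2.
have D20 : 0 <= D2 by rewrite /D2 addr_ge0 ?sqn_ge0.
have [lp1 lp2] := lam_props Gfx Ghx Gfy Ghy alpha z.
set l := lam Gfx Ghx Gfy Ghy rho alpha z in lp1 lp2 D2 D20 z' *.
set dx := dirx Gfx Ghx Gfy Ghy rho alpha z in D2 D20 z' *.
set dy := diry Gfx Ghx Gfy Ghy rho alpha z in D2 D20 z' *.
have ez : z' = z + (gamma *: dx, gamma *: dy) by [].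
have df := descent z (gamma *: dx, gamma *: dy) gf Lipf Lf0.
have dh := descent z (gamma *: dx, gamma *: dy) gh Liph (ltW Lh0).
rewrite -ez /= !dotvZr !sqnZ in df dh.
have edx : dx = - Gfx z - l *: Ghx z by [].
have edy : dy = - Gfy z - l *: Ghy z by [].
have t1 : gamma * (Lf + alpha * Lh) <= 1.
  have p : 0 < Lf + alpha * Lh by apply: ltr_wpDl => //; exact: mulr_gt0.
  by rewrite ler_pdivlMr // in gL.
set s := enorm2 (Ghx z) (Ghy z).
have s0 : 0 <= s by exact: enorm2_ge0.
have es : s * s = sqn (Ghx z) + sqn (Ghy z) by exact: enorm2_sq.
have ma : - (dotv (Ghx z) (Gfx z) + dotv (Ghy z) (Gfy z)) <= s * Cf.
  apply: le_trans (ler_norm _) _; rewrite normrN.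
  apply: le_trans (cs2 (Ghx z) (Gfx z) (Ghy z) (Gfy z)) _; rewrite -/s; apply: ler_wpM2l => //.
have t2 : 0 <= (s - alpha * Lh * Cf) ^+ 2 by exact: sqr_ge0.
have c1 : 0 <= 2 * Lh by lra.
have c2 : 0 <= 2 * Lh * alpha by rewrite mulr_ge0 // ltW.
have c4 : 0 <= Lh * gamma * D2 by rewrite !mulr_ge0 // ltW.
have c6 : 0 <= 2 * Lh * gamma * alpha by rewrite !mulr_ge0 // ltW.
have c7 : 0 <= 2 * gamma by rewrite mulr_ge0 // ltW.
have P1 := ler_wpM2l c1 df.
have P2 := ler_wpM2l c2 dh.
have P3 : 2 * Lh * gamma * (l *
    (l * (sqn (Ghx z) + sqn (Ghy z)) -
     (alpha * (sqn (Ghx z) + sqn (Ghy z)) -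
      (dotv (Ghx z) (Gfx z) + dotv (Ghy z) (Gfy z))))) = 0 by rewrite lp1 mulr0.
have P4 := ler_wpM2l c4 t1.
have P5 := ler_wpM2l (ltW g0) t2.
have P6 := ler_wpM2l c6 ma.
have Q1 := ler_wpM2l c7 lp2.
have Q2 : 0 <= (alpha - gamma) * (Lh * gamma * D2).
  by apply: mulr_ge0; [rewrite subr_ge0 | rewrite !mulr_ge0 // ltW].
rewrite /D2 edx edy !dir1 !dir2 !dir3 in df dh P1 P2 P4 Q2 *.
rewrite /rho.
have P7 : gamma * (s * s) = gamma * (sqn (Ghx z) + sqn (Ghy z)) by rewrite es.
split; lra.
Qed.
End Aux2.

Unset Implicit Arguments.
Theorem theorem1 (R : realType) (n m : nat)
  (f g : 'rV[R]_n * 'rV[R]_m -> R)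
  (Gfx : 'rV[R]_n * 'rV[R]_m -> 'rV[R]_n) (Gfy : 'rV[R]_n * 'rV[R]_m -> 'rV[R]_m)
  (Ggx : 'rV[R]_n * 'rV[R]_m -> 'rV[R]_n) (Ggy : 'rV[R]_n * 'rV[R]_m -> 'rV[R]_m)
  (Ghx : 'rV[R]_n * 'rV[R]_m -> 'rV[R]_n) (Ghy : 'rV[R]_n * 'rV[R]_m -> 'rV[R]_m)
  (Lf Lh Cf alpha C0 gamma : R) (z0 : 'rV[R]_n * 'rV[R]_m) :
  (* f: C^1, bounded below, L_f-Lipschitz gradient, gradient bounded by C_f *)
  is_grad f Gfx Gfy ->
  continuous Gfx -> continuous Gfy ->
  has_lbound (range f) ->
  0 <= Lf -> grad_lipschitz Gfx Gfy Lf ->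
  (forall z, enorm2 (Gfx z) (Gfy z) <= Cf) ->
  (* g: C^2 *)
  is_grad g Ggx Ggy -> C1_vec Ggx -> C1_vec Ggy ->
  (* h := ||grad_y g||^2 is C^1 with L_h-Lipschitz gradient, L_h > 0 *)
  is_grad (fun z => sqn (Ggy z)) Ghx Ghy ->
  continuous Ghx -> continuous Ghy ->
  0 < Lh -> grad_lipschitz Ghx Ghy Lh ->
  (* parameters *)
  0 < alpha -> 0 < C0 ->
  sqn (Ggy z0) <= alpha ^+ 2 * C0 ->
  0 < gamma -> gamma <= alpha -> gamma <= 1 / (Lf + alpha * Lh) ->
  let rho := fun z => sqn (Ghx z) + sqn (Ghy z) in
  let zk := alg_iter Gfx Ghx Gfy Ghy rho alpha gamma z0 in
  let fbar := inf (range f) in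
  forall K : nat, (0 < K)%N ->
    (K%:R^-1 * \sum_(k < K)
        (sqn (dirx Gfx Ghx Gfy Ghy rho alpha (zk k))
         + sqn (diry Gfx Ghx Gfy Ghy rho alpha (zk k)))
     <= 4 * (f z0 + alpha ^+ 3 * C0 - fbar) / (gamma * K%:R)
        + 2 * alpha * C0 / (gamma * Lh * K%:R)
        + 2 * alpha ^+ 2 * Lh * Cf ^+ 2)
    /\
    (K%:R^-1 * \sum_(k < K) (sqn (Ghx (zk k)) + sqn (Ghy (zk k)))
     <= 2 * alpha * C0 / (gamma * K%:R)
        + 2 * Lh * (f z0 + alpha ^+ 3 * C0 - fbar) / (gamma * K%:R)
        + alpha ^+ 2 * Lh ^+ 2 * Cf ^+ 2).

Proof.
move=> gf cGfx cGfy flb Lf0 Lipf Cfb gg C1x C1y gh cGhx cGhy Lh0 Liph a0 C00 h0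
  g0 ga gL rho zk fbar K K0.
have ST : forall k,
  2 * Lh * (f (zk k.+1) + alpha * sqn (Ggy (zk k.+1)))
    + gamma * Lh * (sqn (dirx Gfx Ghx Gfy Ghy rho alpha (zk k))
                    + sqn (diry Gfx Ghx Gfy Ghy rho alpha (zk k)))
  <= 2 * Lh * (f (zk k) + alpha * sqn (Ggy (zk k)))
     + gamma * (alpha ^+ 2 * Lh ^+ 2 * Cf ^+ 2)
     + gamma * (sqn (Ghx (zk k)) + sqn (Ghy (zk k)))
  /\ 2 * sqn (Ggy (zk k.+1)) + 2 * gamma * alpha * (sqn (Ghx (zk k)) + sqn (Ghy (zk k)))
     <= 2 * sqn (Ggy (zk k)) + Lh * gamma * alpha *
        (sqn (dirx Gfx Ghx Gfy Ghy rho alpha (zk k))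
         + sqn (diry Gfx Ghx Gfy Ghy rho alpha (zk k))).
  
  move=> k; exact: (step_ineq (zk k) gf Lipf Lf0 Cfb gh Liph Lh0 a0 g0 ga gL).
have SS : forall N : nat,
  2 * Lh * (f (zk N) + alpha * sqn (Ggy (zk N)))
    + gamma * Lh * \sum_(k < N) (sqn (dirx Gfx Ghx Gfy Ghy rho alpha (zk k))
                    + sqn (diry Gfx Ghx Gfy Ghy rho alpha (zk k)))
  <= 2 * Lh * (f z0 + alpha * sqn (Ggy z0))
     + N%:R * (gamma * (alpha ^+ 2 * Lh ^+ 2 * Cf ^+ 2))
     + gamma * \sum_(k < N) (sqn (Ghx (zk k)) + sqn (Ghy (zk k)))
  /\ 2 * sqn (Ggy (zk N)) + 2 * gamma * alpha * \sum_(k < N) (sqn (Ghx (zk k)) + sqn (Ghy (zk k)))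
     <= 2 * sqn (Ggy z0) + Lh * gamma * alpha *
        \sum_(k < N) (sqn (dirx Gfx Ghx Gfy Ghy rho alpha (zk k))
         + sqn (diry Gfx Ghx Gfy Ghy rho alpha (zk k))).
  elim=> [|N [IH1 IH2]].
    rewrite !big_ord0 !mulr0 mul0r !addr0; split; exact: lexx.
  have [T1 T2] := ST N.
  rewrite !big_ord_recr /= -addn1 natrD /=.
  split; lra.
have [S1 S2] := SS K.
set X := \sum_(k < K) _ in S1 S2 *.
set Y := \sum_(k < K) _ in S1 S2 *.
have fb : fbar <= f (zk K) := ge_inf flb (imageT f (zk K)).
have hK := sqn_ge0 (Ggy (zk K)).
have c1 : 0 <= 2 * Lh * alpha by apply: mulr_ge0; [lra|exact: ltW].
have c2 : 0 <= 2 * Lh by lra.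
have E1 := ler_wpM2l c1 h0.
have E2 := ler_wpM2l c2 fb.
have E3 := mulr_ge0 c1 hK.
have S2' : 2 * gamma * Y <= 2 * alpha * C0 + Lh * gamma * X.
  rewrite -(ler_pM2l a0); lra.
have A : gamma * Lh * X <= 4 * Lh * (f z0 + alpha ^+ 3 * C0 - fbar)
   + 2 * K%:R * (gamma * (alpha ^+ 2 * Lh ^+ 2 * Cf ^+ 2)) + 2 * alpha * C0.
  lra.
have B : gamma * Y <= 2 * alpha * C0 + 2 * Lh * (f z0 + alpha ^+ 3 * C0 - fbar)
   + K%:R * (gamma * (alpha ^+ 2 * Lh ^+ 2 * Cf ^+ 2)) by lra.
have Kp : 0 < K%:R :> R by rewrite ltr0n.
have gn : gamma != 0 by rewrite gt_eqF.
have Ln : Lh != 0 by rewrite gt_eqF.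
have Kn : K%:R != 0 :> R by rewrite gt_eqF.
split.
  have -> : K%:R^-1 * X = (gamma * Lh * X) / (gamma * Lh * K%:R) by field; rewrite ?Kn ?Ln ?gn.
  have -> : 4 * (f z0 + alpha ^+ 3 * C0 - fbar) / (gamma * K%:R)
      + 2 * alpha * C0 / (gamma * Lh * K%:R) + 2 * alpha ^+ 2 * Lh * Cf ^+ 2
    = (4 * Lh * (f z0 + alpha ^+ 3 * C0 - fbar)
   + 2 * K%:R * (gamma * (alpha ^+ 2 * Lh ^+ 2 * Cf ^+ 2)) + 2 * alpha * C0)
      / (gamma * Lh * K%:R) by field; rewrite ?Kn ?Ln ?gn.
  apply: ler_wpM2r => //; rewrite invr_ge0 !mulr_ge0 // ltW //.
have -> : K%:R^-1 * Y = (gamma * Y) / (gamma * K%:R) by field; rewrite ?Kn ?Ln ?gn.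
have -> : 2 * alpha * C0 / (gamma * K%:R)
    + 2 * Lh * (f z0 + alpha ^+ 3 * C0 - fbar) / (gamma * K%:R)
    + alpha ^+ 2 * Lh ^+ 2 * Cf ^+ 2
  = (2 * alpha * C0 + 2 * Lh * (f z0 + alpha ^+ 3 * C0 - fbar)
   + K%:R * (gamma * (alpha ^+ 2 * Lh ^+ 2 * Cf ^+ 2))) / (gamma * K%:R) by field; rewrite ?Kn ?Ln ?gn.
apply: ler_wpM2r => //; rewrite invr_ge0 !mulr_ge0 // ltW //.
Qed.
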